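(* Fix an agent $P_i$ and a stage $k$, and let $\mathcal A'$ be the (finite, nonempty) set of arms still available to $P_i$ at stage $k$. Each arm $A_j\in\mathcal A'$ has a score $v_j\in[0,1]$ and a fit $e_{ij}\in[0,1]$. Fix the state $s=s_{i,k}$, which is assumed to be the true state, and write $\pi_j:=\pi_{i,k}(s,v_j)$ and $\delta_j:=\delta_{i,k}(v_j)$. Let $\eta=\eta_{i,k}\ge 0$, let $\gamma=\gamma_i>\max_{j\in\mathcal A'}(v_j+e_{ij})$, and let $Q:=q_i-c$, where $q_i\ge1$ is the quota of $P_i$ and $c\ge 0$ is the number of arms that accepted $P_i$ at earlier stages. Assume $\pi_j>0$, $\eta\delta_j<\pi_j$ and $v_j+e_{ij}>0$ for all $j\in\mathcal A'$, and $0<Q<\sum_{j\in\mathcal A'}\pi_j$. For $\mathcal B\subseteq\mathcal A'$ define the loss $$\mathcal L^\dagger[\mathcal B]=\sum_{j\in\mathcal B}(v_j+e_{ij})\big[\eta\delta_j-\pi_j\big]+\gamma\max\Big\{\sum_{j\in\mathcal B}\pi_j-Q,\;0\Big\}.$$ Let $r_j:=(v_j+e_{ij})(\pi_j-\eta\delta_j)/\pi_j>0$, and for $b\ge0$ let $S(b):=\{j\in\mathcal A': r_j\ge b\}$ and $\Pi(b):=\sum_{j\in S(b)}\pi_j$. Define the greedy set $\widehat{\mathcal B}$ as follows. (i) If $\Pi(b)=Q$ for some $b\ge0$, set $\widehat{\mathcal B}:=S(b)$ and $\mathrm{UE}^\dagger:=0$. (ii) Otherwise let $\mathcal B^+:=\bigcap_{b\ge0:\,\Pi(b)>Q}S(b)$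 and $\mathcal B^-:=\bigcup_{b\ge0:\,\Pi(b)<Q}S(b)$. Set $\widehat{\mathcal B}:=\mathcal B^+$ if $$\sum_{j\in\mathcal B^+\setminus\mathcal B^-}(v_j+e_{ij})(\pi_j-\eta\delta_j)\;\ge\;\gamma\sum_{j\in\mathcal B^+}\pi_j-\gamma Q,$$ and $\widehat{\mathcal B}:=\mathcal B^-$ otherwise; and set $$\mathrm{UE}^\dagger:=\Big[\min_{j\in\mathcal B^-}r_j\Big]\cdot\Big[Q-\sum_{j\in\mathcal B^-}\pi_j\Big],$$ where, if $\mathcal B^-=\emptyset$, the minimum is interpreted as $\max_{j\in\mathcal A'}r_j$. Then $\mathrm{UE}^\dagger\ge0$ and $$\min_{\mathcal B\subseteq\mathcal A'}\mathcal L^\dagger[\mathcal B]\;\le\;\mathcal L^\dagger[\widehat{\mathcal B}]\;\le\;\min_{\mathcal B\subseteq\mathcal A'}\mathcal L^\dagger[\mathcal B]+\mathrm{UE}^\dagger.$$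
   Context: Model: agents $P_1,\dots,P_m$ with quotas $q_i$ pull arms $A_1,\dots,A_n$ over stages. Agent $P_i$'s latent utility for arm $A_j$ is $v_j+e_{ij}$, where $v_j\in[0,1]$ is a score common to all agents and $e_{ij}\in[0,1]$ an agent-specific fit. For a state parameter $s\in[0,1]$, $\pi_{i,k}(s,v)\in[0,1]$ denotes the probability that an arm of score $v$ accepts $P_i$ at stage $k$; it is continuous and strictly increasing in $s$. The uncertainty measure is $\delta_{i,k}(v):=\tfrac12\big[\max_{s\in[0,1]}\pi_{i,k}(s,v)-\min_{s\in[0,1]}\pi_{i,k}(s,v)\big]$. The parameter $\eta_{i,k}\ge0$ is a regularization parameter penalizing uncertainty, and $\gamma_i$ is the marginal penalty for exceeding the quota. *)

(* Defs.v *)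
From HB Require Import structures.
From mathcomp Require Import all_boot all_order all_algebra.
From mathcomp Require Import all_classical all_reals all_analysis.
Set Implicit Arguments. Unset Strict Implicit. Unset Printing Implicit Defensive.
Import Order.TTheory GRing.Theory Num.Theory.
Import numFieldNormedType.Exports.
Local Open Scope classical_set_scope.
Local Open Scope ring_scope.

Section Defs.
Variable R : realType.

Definition unit_itv : set R := [set s | 0 <= s <= 1].

Definition delta_unc (pif : R -> R -> R) (x : R) : R :=
  (sup [set pif s x | s in unit_itv] - inf [set pif s x | s in unit_itv]) / 2.

Variable T : finType.
Variables (A : {set T}) (w pi delta : T -> R) (eta gamma Q : R).

(* loss L^dagger[B]; w j stands for v_j + e_ij *)
Definition loss (B : {set T}) : R :=
  \sum_(j in B) w j * (eta * delta j - pi j)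
  + gamma * Num.max (\sum_(j in B) pi j - Q) 0.

Definition ratio (j : T) : R := w j * (pi j - eta * delta j) / pi j.

Definition Sset (b : R) : {set T} := [set j in A | b <= ratio j].

Definition PiS (b : R) : R := \sum_(j in Sset b) pi j.

(* B^+ = intersection of S(b) over b >= 0 with Pi(b) > Q (intersected with A,
   harmless since b = 0 is always an index and S(0) is a subset of A) *)
Definition Bplus : {set T} :=
  [set j in A | `[< forall b, 0 <= b -> Q < PiS b -> b <= ratio j >]].

Definition Bminus : {set T} :=
  [set j in A | `[< exists b, [/\ 0 <= b, PiS b < Q & b <= ratio j] >]].

Definition maxA_ratio : R := \big[Num.max/0]_(j in A) ratio j.

Definition minBminus_ratio : R :=
  if Bminus == finset.set0 then maxA_ratio
  else \big[Num.min/maxA_ratio]_(j in Bminus) ratio j.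

Definition plus_cond : bool :=
  gamma * (\sum_(j in Bplus) pi j) - gamma * Q
  <= \sum_(j in Bplus :\: Bminus) w j * (pi j - eta * delta j).

Definition greedy (Bhat : {set T}) (UE : R) : Prop :=
  (exists b, [/\ 0 <= b, PiS b = Q, Bhat = Sset b & UE = 0])
  \/ [/\ (forall b, 0 <= b -> PiS b <> Q),
         Bhat = (if plus_cond then Bplus else Bminus)
       & UE = minBminus_ratio * (Q - \sum_(j in Bminus) pi j)].

Definition min_loss : R :=
  \big[Num.min/loss finset.set0]_(B : {set T} | B \subset A) loss B.

End Defs.
Arguments unit_itv {R}.

(* Main.v *)
Require Import Defs.
From HB Require Import structures.
From mathcomp Require Import all_boot all_order all_algebra.
From mathcomp Require Import all_classical all_reals all_analysis.
From mathcomp Require Import ring lra.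
Import Order.TTheory GRing.Theory Num.Theory.
Import numFieldNormedType.Exports.
Local Open Scope classical_set_scope.
Local Open Scope ring_scope.
Lemma delta_ge0 (R : realType) (pif : R -> R -> R) x :
  (forall s', unit_itv s' -> 0 <= pif s' x <= 1) -> 0 <= delta_unc pif x.
Proof.
move=> H; rewrite /delta_unc divr_ge0 // subr_ge0.
set E := [set pif s x | s in unit_itv].
have E0 : E (pif 0 x) by exists 0 => //; rewrite /unit_itv /= lexx ler01.
apply: (@le_trans _ _ (pif 0 x)).
  apply: ge_inf => //; exists 0 => y [s' Hs' <-]; by case/andP: (H _ Hs').
apply: ub_le_sup => //; exists 1 => y [s' Hs' <-]; by case/andP: (H _ Hs').
Qed.

Lemma sum_sub_le (R : numDomainType) (T : finType) (X Y : {set T}) (f : T -> R) :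
  X \subset Y -> (forall j, j \in Y -> 0 <= f j) ->
  \sum_(j in X) f j <= \sum_(j in Y) f j.
Proof.
move=> sXY f0; rewrite [X in _ <= X](big_setID X) /=.
rewrite (finset.setIidPr sXY) lerDl sumr_ge0 // => j; rewrite inE => /andP[_]; exact: f0.
Qed.

Section LB.
Variables (R : realType) (T : finType) (A : {set T}) (w pi delta : T -> R)
  (eta gamma Q : R).
Hypothesis pi_pos : forall j, j \in A -> 0 < pi j.
Let u j := w j * (pi j - eta * delta j).

Lemma lossE B : Defs.loss w pi delta eta gamma Q B =
  - \sum_(j in B) u j + gamma * Num.max (\sum_(j in B) pi j - Q) 0.
Proof.
rewrite /Defs.loss -sumrN; congr (_ + _); apply: eq_bigr => j _; rewrite /u; ring.
Qed.

Lemma loss_lb (rho : R) (C : {set T}) :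
  C \subset A -> 0 <= rho -> rho <= gamma ->
  (forall j, j \in C -> rho <= Defs.ratio w pi delta eta j) ->
  (forall j, j \in A -> j \notin C -> Defs.ratio w pi delta eta j <= rho) ->
  forall B : {set T}, B \subset A ->
  rho * \sum_(j in C) pi j - \sum_(j in C) u j - rho * Q
    <= Defs.loss w pi delta eta gamma Q B.
Proof.
move=> sCA r0 rg HC HA B sBA.
pose g j := rho * pi j - u j.
have gE j : j \in A -> g j = pi j * (rho - Defs.ratio w pi delta eta j).
  move=> jA; rewrite /g /Defs.ratio -/(u j) mulrBr mulrC; congr (_ - _).
  by rewrite mulrC divfK // gt_eqF // pi_pos.
have -> : rho * \sum_(j in C) pi j - \sum_(j in C) u j = \sum_(j in C) g j.
  by rewrite /g sumrB mulr_sumr.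
rewrite lossE.
have h1 : rho * (\sum_(j in B) pi j - Q) <=
          gamma * Num.max (\sum_(j in B) pi j - Q) 0.
  apply: (@le_trans _ _ (rho * Num.max (\sum_(j in B) pi j - Q) 0)).
    by rewrite ler_wpM2l // le_max lexx.
  by rewrite ler_wpM2r // le_max lexx orbT.
apply: (@le_trans _ _ (- \sum_(j in B) u j + rho * (\sum_(j in B) pi j - Q)));
  last by rewrite lerD2l.
have -> : - \sum_(j in B) u j + rho * (\sum_(j in B) pi j - Q) =
          \sum_(j in B) g j - rho * Q.
  by rewrite /g sumrB -mulr_sumr mulrBr; ring.
rewrite lerD2r (big_setID B) [X in _ <= X](big_setID C) /= finset.setIC.
apply: lerD => //.
apply: (@le_trans _ _ 0).

  apply: sumr_le0 => j; rewrite inE => /andP[_ jC].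
  rewrite gE ?(fintype.subsetP sCA) //.
  apply: mulr_ge0_le0; last by rewrite subr_le0 HC.
  by rewrite ltW // pi_pos // (fintype.subsetP sCA).
apply: sumr_ge0 => j; rewrite inE => /andP[jC jB].
have jA := fintype.subsetP sBA _ jB.
by rewrite gE // mulr_ge0 ?subr_ge0 ?HA // ltW // pi_pos.
Qed.
End LB.
Theorem theorem2 (R : realType) (T : finType) (A : {set T})
  (v e : T -> R) (pif : R -> R -> R) (s eta gamma : R) (q c : nat) :
  (forall s' x, unit_itv s' -> unit_itv x -> 0 <= pif s' x <= 1) ->
  (forall x, unit_itv x -> {within unit_itv, continuous (fun s' => pif s' x)}) ->
  (forall x s1 s2, unit_itv x -> unit_itv s1 -> unit_itv s2 ->
     s1 < s2 -> pif s1 x < pif s2 x) ->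
  unit_itv s ->
  A != finset.set0 ->
  (forall j, j \in A -> unit_itv (v j) /\ unit_itv (e j)) ->
  0 <= eta ->
  (forall j, j \in A -> v j + e j < gamma) ->
  (1 <= q)%N ->
  let pi := fun j => pif s (v j) in
  let delta := fun j => delta_unc pif (v j) in
  let w := fun j => v j + e j in
  let Q : R := q%:R - c%:R in
  (forall j, j \in A ->
     [/\ 0 < pi j, eta * delta j < pi j & 0 < w j]) ->
  0 < Q -> Q < \sum_(j in A) pi j ->
  forall (Bhat : {set T}) (UE : R),
    greedy A w pi delta eta gamma Q Bhat UE ->
    [/\ 0 <= UE,
        min_loss A w pi delta eta gamma Q
          <= loss w pi delta eta gamma Q Bhat
      & loss w pi delta eta gamma Q Bhat
          <= min_loss A w pi delta eta gamma Q + UE].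
Proof.
move=> Hpif _ _ Hs HA Hve Heta Hgam Hq pi delta w Q Hj HQ0 HQA Bhat UE Hg.
set r := Defs.ratio w pi delta eta.
set u := fun j => w j * (pi j - eta * delta j).
have pi0 j : j \in A -> 0 < pi j by move=> /Hj[].
have d0 j : j \in A -> 0 <= delta j.
  move=> jA; apply: delta_ge0 => s' Hs'; apply: Hpif => //; exact: (Hve j jA).1.
have u0 j : j \in A -> 0 <= u j.
  move=> jA; have [h1 h2 h3] := Hj j jA.
  by rewrite /u mulr_ge0 ?ltW // subr_gt0.
have r0 j : j \in A -> 0 <= r j.
  by move=> jA; rewrite /r /Defs.ratio divr_ge0 ?u0 // ltW // pi0.
have rg j : j \in A -> r j < gamma.
  move=> jA; have [h1 h2 h3] := Hj j jA.
  apply: (@le_lt_trans _ _ (w j)); last exact: Hgam.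
  rewrite /r /Defs.ratio ler_pdivrMr //.
  apply: ler_wpM2l; first exact: ltW h3.
  have := mulr_ge0 Heta (d0 j jA); lra.
have g0 : 0 <= gamma.
  by case/set0Pn: HA => j jA; apply: le_trans (ltW (rg j jA)); exact: r0.
have lossE := @lossE R T w pi delta eta gamma Q.
have LB := @loss_lb R T A w pi delta eta gamma Q pi0.
have min_le (B : {set T}) : B \subset A -> min_loss A w pi delta eta gamma Q <= Defs.loss w pi delta eta gamma Q B.
  by move=> BA; rewrite /min_loss; exact: bigmin_le_cond.
have le_min x : (forall B : {set T}, B \subset A -> x <= Defs.loss w pi delta eta gamma Q B) ->
    x <= min_loss A w pi delta eta gamma Q.
  by move=> H; rewrite /min_loss; apply: le_bigmin => //; apply: H; exact: finset.sub0set.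
have SA b : Sset A w pi delta eta b \subset A.
  by apply/fintype.subsetP => j; rewrite inE => /andP[].
have PiS_mono b1 b2 : b1 <= b2 -> PiS A w pi delta eta b2 <= PiS A w pi delta eta b1.
  move=> b12; apply: sum_sub_le; last by move=> j /(fintype.subsetP (SA b1)) /pi0 /ltW.
  apply/fintype.subsetP => j; rewrite !inE => /andP[-> h].
  exact: le_trans h.
case: Hg => [[b [b0 Pb -> ->]] | [Hne -> ->]].
  have [j jS] : exists j, j \in Sset A w pi delta eta b.
    apply/set0Pn/eqP => E; move: Pb; rewrite /PiS E big_set0 => Q0.
    by rewrite -Q0 ltxx in HQ0.
  have bg : b <= gamma.
    move: jS; rewrite inE => /andP[jA bj]; exact: le_trans bj (ltW (rg j jA)).
  have LBb := LB b _ (SA b) b0 bg.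
  split => //; first exact: min_le.
  rewrite addr0 lossE -/(PiS A w pi delta eta b) Pb subrr maxxx mulr0 addr0.
  apply: le_min => B BA.
  have := LBb _ _ B BA; rewrite -/(PiS A w pi delta eta b) Pb addrAC subrr add0r.
  apply.
    by move=> k; rewrite inE => /andP[].
  by move=> k kA; rewrite inE kA /= -ltNge => /ltW.
set Bm := Bminus A w pi delta eta Q.
set Bp := Bplus A w pi delta eta Q.
set maxA := maxA_ratio A w pi delta eta.
have inBm j : j \in Bm -> j \in A /\ exists b, [/\ 0 <= b, PiS A w pi delta eta b < Q & b <= r j].
  by rewrite inE => /andP[jA /asboolP H].
have notBm j : j \in A -> j \notin Bm -> forall b, 0 <= b -> PiS A w pi delta eta b < Q -> r j < b.
  move=> jA; rewrite inE jA /= => /asboolPn H b b0 Pb.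
  by rewrite ltNge; apply/negP => bj; apply: H; exists b.
have BmA : Bm \subset A by apply/fintype.subsetP => j /inBm[].
have BpA : Bp \subset A by apply/fintype.subsetP => j; rewrite inE => /andP[].
have BmBp : Bm \subset Bp.
  apply/fintype.subsetP => j /inBm [jA [b1 [b10 Pb1 b1j]]].
  rewrite inE jA /=; apply/asboolP => b b0 Pb.
  rewrite leNgt; apply/negP => jb.
  have := PiS_mono _ _ (le_trans b1j (ltW jb)).
  by rewrite leNgt (lt_trans Pb1 Pb).
have maxA_ge k : k \in A -> r k <= maxA by move=> kA; exact: le_bigmax_cond.
have maxA0 : 0 <= maxA by exact: bigmax_ge_id.
have PmQ : \sum_(j in Bm) pi j <= Q.
  case: (boolP (Bm == finset.set0)) => [/eqP->|]; first by rewrite big_set0 ltW.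
  move/set0Pn => [j0 j0Bm].
  have [i0 i0Bm Emin] := @eq_bigmin _ _ _ maxA j0 (fun i => i \in Bm) r j0Bm
    (fun i iB => maxA_ge i (fintype.subsetP BmA i iB)).
  have [_ [b0 [b00 Pb0 b0i]]] := inBm i0 i0Bm.
  apply: (le_trans _ (ltW Pb0)); apply: sum_sub_le;
    last by move=> j /(fintype.subsetP (SA b0)) /pi0 /ltW.
  apply/fintype.subsetP => j jBm; rewrite inE (fintype.subsetP BmA j jBm) /=.
  apply: (le_trans b0i); rewrite -Emin; exact: bigmin_le_cond.
set rho := \big[Num.max/0]_(j in A :\: Bm) r j.
have rho0 : 0 <= rho by exact: bigmax_ge_id.
have rhoA k : k \in A -> k \notin Bm -> r k <= rho.
  by move=> kA kB; apply: le_bigmax_cond; rewrite inE kA kB.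
have rhog : rho <= gamma.
  apply: bigmax_le => // k; rewrite inE => /andP[_ kA]; exact: ltW (rg k kA).
have rhoBm j : j \in Bm -> rho <= r j.
  move=> jB; have [jA [b1 [b10 Pb1 b1j]]] := inBm j jB.
  apply: bigmax_le; first exact: r0.
  move=> k; rewrite inE => /andP[kB kA].
  exact: ltW (lt_le_trans (notBm k kA kB b1 b10 Pb1) b1j).
have rho_min : rho <= minBminus_ratio A w pi delta eta Q.
  have rhomax : rho <= maxA by apply: bigmax_le => // k; rewrite inE => /andP[_ /maxA_ge].
  rewrite /minBminus_ratio -/Bm -/maxA; case: ifP => // _.
  by apply: le_bigmin => // j /rhoBm.
have LBm := LB rho Bm BmA rho0 rhog rhoBm rhoA.
have lossBm : Defs.loss w pi delta eta gamma Q Bm = - \sum_(j in Bm) u j.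
  rewrite lossE; have -> : Num.max (\sum_(j in Bm) pi j - Q) 0 = 0.
    by apply/max_idPr; rewrite subr_le0.
  by rewrite mulr0 addr0.
have hatBm : Defs.loss w pi delta eta gamma Q (if plus_cond A w pi delta eta gamma Q then Bp else Bm)
   <= Defs.loss w pi delta eta gamma Q Bm.
  rewrite /plus_cond -/Bp -/Bm; case: ifP => // pc.
  rewrite lossBm lossE (big_setID Bm) /= (finset.setIidPr BmBp).
  rewrite opprD -addrA /u gerDl.
  have sd0 : 0 <= \sum_(i in Bp :\: Bm) w i * (pi i - eta * delta i).
    apply: sumr_ge0 => i; rewrite inE => /andP[_ /(fintype.subsetP BpA) iA].
    exact: u0.
  have [h|h] := leP (\sum_(j in Bp) pi j - Q) 0.
  by rewrite mulr0 addr0 oppr_le0.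
  move: pc; lra.
have Hhat : (if plus_cond A w pi delta eta gamma Q then Bp else Bm) \subset A.
  by case: ifP.
split.
- apply: mulr_ge0; first exact: le_trans rho_min.
  by rewrite subr_ge0.
- exact: min_le.
apply: (le_trans hatBm); rewrite lossBm.
have H1 : - \sum_(j in Bm) u j - rho * (Q - \sum_(j in Bm) pi j) <= min_loss A w pi delta eta gamma Q.
  apply: le_min => B BA; apply: le_trans (LBm B BA); rewrite /u; lra.
have H2 : rho * (Q - \sum_(j in Bm) pi j) <= minBminus_ratio A w pi delta eta Q * (Q - \sum_(j in Bm) pi j).
  by apply: ler_wpM2r => //; rewrite subr_ge0.
lra.
Qed.
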